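(* Let $O$ be an object of $\mathsf{CRP}_{\mathcal{L}^{(t)}_{m,q}}$ and let $A$ be a Lazardian $O$-algebra. An $A$-algebra $B$ is an object of $\mathsf{CRP}_A$ if and only if (regarded as an $O$-algebra) it is an object of $\mathsf{CRP}_O$. In particular, restriction of scalars $\mathsf{Alg}_A\to\mathsf{Alg}_O$ restricts to a functor $\mathsf{CRP}_A\to\mathsf{CRP}_O$.
   Context: Fix a prime $p$, $t\in\mathbf{Z}$, $m\in\mathbf{N}\cup\{\infty\}$, $q>1$ a power of $p$, and $\mathcal{L}^{(t)}_{m,q}:=\mathbf{Z}[\omega_i^{q^{-\infty}}\mid1\le i\le m][[\pi]]/(p-\sum_{i=1}^m\omega_i^{q^t}\pi^i,\pi^{m+1})$ (with $\pi^{\infty+1}:=0$). For a ring $R$ receiving a ring map from $\mathcal{L}^{(t)}_{m,q}$ (so $\pi$ has an image in $R$), $\mathsf{CRP}_R$ is the full subcategory of $R$-algebras $B$ such that $B$ is $\pi B$-adically complete, $B/\pi B$ is a perfect $\mathbf{F}_p$-algebra, and the multiplication map $\pi R\otimes_RB\to B$ is injective. A Lazardian $O$-algebra is an $O$-algebra $A$ that is $\pi A$-adically complete and such that $\pi O\otimes_OA\to A$ is injective. *)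

(* Defs.v *)
From HB Require Import structures.
From mathcomp Require Import all_boot all_order all_algebra.
Set Implicit Arguments. Unset Strict Implicit. Unset Printing Implicit Defensive.
Import GRing.Theory.
Local Open Scope ring_scope.

(* Commutative rings are [comPzRingType] (the zero ring is allowed).
   An R-algebra B is a ring B with a ring map f : R -> B (in the theorem f
   is always an rmorphism); the image of pi in B is f pi. *)

Definition in_pow_ideal (B : comPzRingType) (piB : B) (n : nat) (x : B) : Prop :=
  exists c : B, x = piB ^+ n * c.

(* B is piB-adically complete (and separated): the canonical map
   B -> lim_n B / pi^n B is bijective.  An element of the inverse limit is
   represented by a sequence of lifts x n with x (n+1) = x n mod pi^n B. *)
Definition adically_complete (B : comPzRingType) (piB : B) : Prop :=
  forall x : nat -> B,
    (forall n, in_pow_ideal piB n (x n.+1 - x n)) ->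
    exists! b : B, forall n, in_pow_ideal piB n (b - x n).

(* B / piB is a perfect F_p-algebra: p = 0 in B/piB and the Frobenius
   x |-> x^p of B/piB is bijective. *)
Definition perfect_mod (p : nat) (B : comPzRingType) (piB : B) : Prop :=
  [/\ in_pow_ideal piB 1 (p%:R : B),
      (forall x : B, in_pow_ideal piB 1 (x ^+ p) -> in_pow_ideal piB 1 x)
    & (forall x : B, exists y : B, in_pow_ideal piB 1 (x - y ^+ p))].

Definition in_pi (R : comPzRingType) (piR : R) (r : R) : Prop :=
  exists s : R, r = piR * s.

Definition balanced (R B : comPzRingType) (f : R -> B) (piR : R)
    (G : zmodType) (beta : R -> B -> G) : Prop :=
  [/\ forall x x' b, in_pi piR x -> in_pi piR x' ->
         beta (x + x') b = beta x b + beta x' b,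
      forall x b b', in_pi piR x -> beta x (b + b') = beta x b + beta x b'
    & forall r x b, in_pi piR x -> beta (r * x) b = beta x (f r * b)].

(* The element  sum_i x_i (x) b_i  of  (pi R) (x)_R B  is zero, expressed
   through the universal property of the tensor product. *)
Definition tensor_zero (R B : comPzRingType) (f : R -> B) (piR : R)
    (s : seq (R * B)) : Prop :=
  forall (G : zmodType) (beta : R -> B -> G),
    balanced f piR beta -> \sum_(xb <- s) beta xb.1 xb.2 = 0.

(* The multiplication map  pi R (x)_R B -> B  is injective (every element of
   the tensor product is a finite sum of pure tensors). *)
Definition pi_tensor_injective (R B : comPzRingType) (f : R -> B) (piR : R)
    : Prop :=
  forall s : seq (R * B),
    (forall xb, xb \in s -> in_pi piR xb.1) ->
    \sum_(xb <- s) f xb.1 * xb.2 = 0 -> tensor_zero f piR s.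

(* B (an R-algebra via f) is an object of CRP_R, where piR is the image of
   pi in R. *)
Definition CRP (p : nat) (R B : comPzRingType) (piR : R) (f : R -> B) : Prop :=
  [/\ adically_complete (f piR), perfect_mod p (f piR)
    & pi_tensor_injective f piR].

Definition Lazardian (O A : comPzRingType) (piO : O) (f : O -> A) : Prop :=
  adically_complete (f piO) /\ pi_tensor_injective f piO.

(* Main.v *)
Require Import Defs.
From HB Require Import structures.
From mathcomp Require Import all_boot all_order all_algebra.
From Stdlib Require Import ClassicalEpsilon.
Set Implicit Arguments. Unset Strict Implicit.
Import GRing.Theory.
Local Open Scope ring_scope.

Definition pickc (R A : comPzRingType) (f : R -> A) (piR : R) (a : A) : A :=
  epsilon (inhabits 0) (fun c => a = f piR * c).

Lemma pickcP (R A : comPzRingType) (f : R -> A) (piR : R) (a : A) :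
  in_pi (f piR) a -> a = f piR * pickc f piR a.
Proof.
move=> h; rewrite /pickc; apply: (epsilon_spec (inhabits 0) (fun c => a = f piR * c)).
exact: h.
Qed.

Lemma bal0 (R B : comPzRingType) (f : R -> B) (piR : R) (G : zmodType)
  (beta : R -> B -> G) x : balanced f piR beta -> in_pi piR x -> beta x 0 = 0.
Proof.
case=> _ H2 _ hx; apply: (@addrI _ (beta x 0)); rewrite addr0 -H2 ?addr0 //.
Qed.

Lemma balB (R B : comPzRingType) (f : R -> B) (piR : R) (G : zmodType)
  (beta : R -> B -> G) x b b' : balanced f piR beta -> in_pi piR x ->
  beta x (b - b') = beta x b - beta x b'.
Proof.
move=> hb hx; have [_ H2 _] := hb.
apply/eqP; rewrite eq_sym subr_eq -H2 // subrK //.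
Qed.

Lemma key (O A B : comPzRingType) (fA : {rmorphism O -> A})
  (fB : {rmorphism A -> B}) (piO : O) (hA : pi_tensor_injective fA piO) :
  pi_tensor_injective fB (fA piO) <-> pi_tensor_injective (fB \o fA) piO.
Proof.
have piOin : in_pi piO piO by exists 1; rewrite mulr1.
split.
- move=> hB s hs hsum G beta hbeta.
  have [Hb1 Hb2 Hb3] := hbeta.
  have WD : forall c c' b, fA piO * c = fA piO * c' ->
      beta piO (fB c * b) = beta piO (fB c' * b).
    move=> c c' b hcc.
    have H0 : tensor_zero fA piO [:: (piO, c - c')].
      apply: hA; first by move=> xb; rewrite mem_seq1 => /eqP -> /=.
      by rewrite big_seq1 /= mulrBr hcc subrr.
    have bal : balanced fA piO (fun x a => beta x (fB a * b)).
      split.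
      * by move=> x x' a hx hx'; rewrite Hb1.
      * by move=> x a a' hx; rewrite rmorphD /= mulrDl Hb2.
      * by move=> r x a hx; rewrite Hb3 //= rmorphM /= mulrA.
    have := H0 G _ bal.
    rewrite big_seq1 /= rmorphB /= mulrBl (balB _ _ hbeta piOin).
    by move/eqP; rewrite subr_eq0 => /eqP.
  pose gamma := fun a b => beta piO (fB (pickc fA piO a) * b).
  have hgamma : balanced fB (fA piO) gamma.
    split.
    + move=> x x' b hx hx'; rewrite /gamma.
      rewrite (WD _ (pickc fA piO x + pickc fA piO x')); last first.
        by rewrite mulrDr -!pickcP //; case: hx => u ->; case: hx' => v ->;
          exists (u + v); rewrite mulrDr.
      by rewrite rmorphD /= mulrDl Hb2.
    + by move=> x b b' hx; rewrite /gamma mulrDr Hb2.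
    + move=> r x b hx; rewrite /gamma.
      rewrite (WD _ (r * pickc fA piO x)); last first.
        rewrite -pickcP; last by case: hx => u ->; exists (r * u); rewrite mulrCA.
        by rewrite mulrCA -pickcP.
      by congr beta; rewrite rmorphM -mulrA mulrCA.
  have H0 : tensor_zero fB (fA piO) [seq (fA xb.1, xb.2) | xb <- s].
    apply: hB; last by rewrite big_map.
    by move=> xb /mapP [yb /hs [u hu] ->] /=; exists (fA u); rewrite hu rmorphM.
  have := H0 G gamma hgamma.
  rewrite big_map => H1; apply: (eq_trans _ H1).
  rewrite big_seq [RHS]big_seq; apply: eq_bigr => xb /hs [u hu] /=.
  rewrite /gamma hu (WD _ (fA u)); last first.
    by rewrite -pickcP ?rmorphM //; exists (fA u).
  by rewrite mulrC Hb3 // mulrC.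
- move=> hB s hs hsum G gamma hgamma.
  have [Hg1 Hg2 Hg3] := hgamma.
  have inA : in_pi (fA piO) (fA piO) by exists 1; rewrite mulr1.
  pose beta := fun x b => gamma (fA x) b.
  have hbeta : balanced (fB \o fA) piO beta.
    split.
    + move=> x x' b [u hu] [v hv]; rewrite /beta rmorphD Hg1 //.
      * by exists (fA u); rewrite hu rmorphM.
      * by exists (fA v); rewrite hv rmorphM.
    + by move=> x b b' hx; rewrite /beta Hg2 //; case: hx => u ->; exists (fA u); rewrite rmorphM.
    + move=> r x b [u hu]; rewrite /beta rmorphM Hg3 //.
      by exists (fA u); rewrite hu rmorphM.
  pose s'' := [seq (piO, fB (pickc fA piO xb.1) * xb.2) | xb <- s].
  have H0 : tensor_zero (fB \o fA) piO s''.
    apply: hB; first by move=> xb /mapP [yb _ ->].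
    apply: (eq_trans _ hsum); rewrite big_map big_seq [RHS]big_seq; apply: eq_bigr => xb /hs hx /=.
    by rewrite mulrA -rmorphM -pickcP.
  have := H0 G beta hbeta.
  rewrite big_map => H1; apply: (eq_trans _ H1).
  rewrite big_seq [RHS]big_seq; apply: eq_bigr => xb /hs hx /=.
  rewrite /beta -Hg3 // mulrC -pickcP //.
Qed.

Theorem proposition5p1 (p : nat) (hp : prime p)
    (L : comPzRingType) (pi : L)
    (O : comPzRingType) (fO : {rmorphism L -> O})
    (hO : CRP p pi fO)
    (A : comPzRingType) (fA : {rmorphism O -> A})
    (hA : Lazardian (fO pi) fA)
    (B : comPzRingType) (fB : {rmorphism A -> B}) :
  CRP p (fA (fO pi)) fB <-> CRP p (fO pi) (fB \o fA).
Proof.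
have [_ hinj] := hA.
have := key fB hinj.
by split=> -[h1 h2 h3]; split=> //; apply/H.
Qed.
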